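(* Let $\phi(\beta)=\sum_{k=0}^\infty k!\,\beta^k$ as a formal power series. Then for all integers $n\ge1$ and $k\ge0$, \[ [\beta^k]\,\phi(\beta)^n\le k!\prod_{j=1}^k\Big(1+\frac{n-1}{j^2}\Big)\le 6^n\,k!. \] Equivalently, $\sum_{l_1+\dots+l_n=k,\ l_i\ge0}\prod_{i=1}^n l_i!\le k!\prod_{j=1}^k(1+(n-1)/j^2)$.
   Context: $[\beta^k]F(\beta)$ denotes the coefficient of $\beta^k$ in the formal power series $F$. *)

(* Defs.v *)
From HB Require Import structures.
From mathcomp Require Import all_boot all_order all_algebra.
Set Implicit Arguments. Unset Strict Implicit. Unset Printing Implicit Defensive.

Definition fps := nat -> nat.

Definition fps_mul (f g : fps) : fps :=
  fun k => (\sum_(i < k.+1) f i * g (k - i))%N.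

Definition fps_one : fps := fun k => (k == 0%N : nat).

Fixpoint fps_exp (f : fps) (n : nat) : fps :=
  match n with
  | 0 => fps_one
  | n'.+1 => fps_mul f (fps_exp f n')
  end.

Definition coeff (k : nat) (F : fps) : nat := F k.

Definition phi : fps := fun k => k`!.

(* Main.v *)
From Stdlib Require Import Lia PeanoNat Arith.
Lemma st3 (k:nat) : ((k+1)*(k+3)*((k+2)*(k+2)+1) <= (k+2)*(k+2)*((k+2)*(k+2)))%nat.
Proof. nia. Qed.
Lemma stp1 (k P B : nat) : ((S (S k))*P <= 4*(S k)*B -> (S (S (S k)))*(P*(S ((S (S k))*(S (S k))))) <= 4*(S (S k))*(B*((S (S k))*(S (S k)))))%nat.
Proof. intro H. replace (S (S (S k))) with (k+3)%nat by lia. replace (S (S k)) with (k+2)%nat in * by lia.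
replace (S k) with (k+1)%nat in * by lia. replace (S ((k+2)*(k+2)))%nat with ((k+2)*(k+2)+1)%nat by lia. pose proof (st3 k).
assert (H1 : ((k+2)*((k+3)*(P*((k+2)*(k+2)+1))) <= (k+2)*(4*(k+2)*(B*((k+2)*(k+2)))))%nat).
2: nia.
pose proof (Nat.mul_le_mono_r _ _ ((k+3)*((k+2)*(k+2)+1)) H).
pose proof (Nat.mul_le_mono_l _ _ (4*B) H0).
nia.
Qed.
Lemma st4 (x c : nat) : ((x + S c) * x <= (x + c) * (x + 1))%nat.
Proof. nia. Qed.

Require Import Defs.
From HB Require Import structures.
From mathcomp Require Import all_boot all_order all_algebra.
Lemma arith1 i q n : i.+1 ^ 2 + q.+1 ^ 2 + n <= (i + q).+1 ^ 2 + n.+1.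
Proof.
rewrite -!mulnn. apply/leP. rewrite -!plusE -!multE. nia.
Qed.

Lemma arith2 I c f x y n K : c*y + x <= (c^2+n)*x -> I^2 + c^2 + n <= K ->
  I*(I*f*x) + c*(f*y) + f*x <= K*(f*x).
Proof.
rewrite -!mulnn => /leP H1 /leP H2. apply/leP. rewrite -!plusE -!multE in H1 H2 *.
pose proof (Nat.mul_le_mono_l _ _ f H1).
pose proof (Nat.mul_le_mono_l _ _ (f*x) H2).
nia.
Qed.

Lemma rec_phi n k :
  k.+1 * fps_exp phi n k.+1 + fps_exp phi n k <= (k.+1 ^ 2 + n) * fps_exp phi n k.
Proof.
elim: n k => [|n IH] k.
  rewrite /= /fps_one /= muln0 add0n addn0. by apply: leq_pmull.
set a := fps_exp phi n.
have -> : fps_exp phi n.+1 = fps_mul phi a by [].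
rewrite /fps_mul /phi.
rewrite big_distrr /=.
have -> : \sum_(i < k.+2) k.+1 * (i`! * a (k.+1 - i)) =
   \sum_(i < k.+2) i * (i`! * a (k.+1 - i)) + \sum_(i < k.+2) (k.+1 - i) * (i`! * a (k.+1 - i)).
  rewrite -big_split /=; apply: eq_bigr => i _.
  by rewrite -mulnDl subnKC // -ltnS.
rewrite [\sum_(i < k.+2) i * _]big_ord_recl [\sum_(i < k.+2) (k.+1 - i) * _]big_ord_recr /=.
rewrite mul0n add0n subnn mul0n addn0.
rewrite -!big_split big_distrr /=.
apply: leq_sum => i _.
have hi : i <= k by rewrite -ltnS.
rewrite /bump /= add1n subSS.
have := IH (k - i).
rewrite factS.
set x := a (k - i); set y := a (k.+1 - i); set f := i`!.
rewrite -subSn //.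
move=> H.
have := arith1 i (k - i) n. rewrite subnKC //.
move=> H2.
rewrite -/a -/x -/y !subSn // in H *.
exact: (arith2 _ _ _ _ _ _ _ H H2).
Qed.



Lemma a0 n : fps_exp phi n 0 = 1.
Proof. elim: n => [//|n IH] /=. by rewrite /fps_mul big_ord_recl big_ord0 /phi IH. Qed.

Lemma part1 n k : fps_exp phi n.+1 k * k`! <= \prod_(1 <= j < k.+1) (j^2 + n).
Proof.
elim: k => [|k IH]; first by rewrite a0 big_geq.
rewrite big_nat_recr //= factS.
have H := rec_phi n.+1 k.
have H' : k.+1 * fps_exp phi n.+1 k.+1 <= (k.+1 ^ 2 + n) * fps_exp phi n.+1 k.
  by rewrite -(leq_add2r (fps_exp phi n.+1 k)) -{3}(mul1n (fps_exp phi n.+1 k)) -mulnDl -addnA addn1.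
rewrite mulnCA mulnA [_ * (_ ^ 2 + _)]mulnC.
apply: (leq_trans (leq_mul H' (leqnn _))).
by rewrite -mulnA leq_mul2l IH orbT.
Qed.

Lemma p1 k : (k+2) * \prod_(1 <= j < k.+2) (j^2 + 1) <= 4 * (k+1) * \prod_(1 <= j < k.+2) j^2.
Proof.
elim: k => [|k IH]; first by rewrite !big_nat1.
rewrite big_nat_recr //= [\prod_(1 <= j < k.+3) j^2]big_nat_recr //=.
rewrite addn2 addn1 in IH.
have /leP := stp1 _ _ _ (elimT leP IH).
by rewrite -!mulnn !addn2 !addn1.
Qed.

Lemma p2 k : \prod_(1 <= j < k.+1) (j^2 + 1) <= 4 * \prod_(1 <= j < k.+1) j^2.
Proof.
case: k => [|k]; first by rewrite !big_geq.
rewrite -(leq_pmul2l (_ : 0 < k + 2)) ?addn2 //.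
have := p1 k; rewrite addn2 addn1 => h; apply: (leq_trans h).
by rewrite mulnCA -mulnA leq_mul2l (leq_mul2r) leqnSn !orbT.
Qed.

Lemma Bpos k : 0 < \prod_(1 <= j < k.+1) j^2.
Proof. elim: k => [|k IH]; first by rewrite big_geq.
by rewrite big_nat_recr //= muln_gt0 IH expn_gt0. Qed.

Lemma p3 c k : \prod_(1 <= j < k.+1) (j^2 + c) <= (4 ^ c * \prod_(1 <= j < k.+1) j^2)%N.
Proof.
elim: c => [|c IH].
  rewrite expn0 mul1n. by under eq_bigr do rewrite addn0.
rewrite -(leq_pmul2r (Bpos k)).
rewrite -big_split /=.
apply: (@leq_trans (\prod_(1 <= j < k.+1) ((j^2 + c) * (j^2 + 1)))).
  apply: leq_prod => j _. by apply/leP; apply: st4.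
rewrite big_split /= expnS.
apply: (leq_trans (leq_mul IH (p2 k))).
by rewrite mulnCA !mulnA.
Qed.

Import Order.TTheory GRing.Theory Num.Theory.

Lemma Bfact k : \prod_(1 <= j < k.+1) j^2 = k`! * k`!.
Proof. elim: k => [|k IH]; first by rewrite big_geq.
by rewrite big_nat_recr //= IH factS -mulnn mulnACA [k.+1 * k`!]mulnC. Qed.

Lemma p4 m : 4 ^ m <= 6 ^ m.+1.
Proof.
case: m => [//|m]. apply: (@leq_trans (6 ^ m.+1)).
  by rewrite leq_exp2r.
by rewrite leq_pexp2l.
Qed.

Local Open Scope ring_scope.
Lemma conv (c k : nat) :
  (\prod_(1 <= j < k.+1) (1 + c%:R / (j ^ 2)%N%:R : rat))%R
   = ((\prod_(1 <= j < k.+1) (j^2 + c)%N)%:R / (\prod_(1 <= j < k.+1) (j^2)%N)%:R)%R.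
Proof.
rewrite !natr_prod -prodf_div !big_nat; apply: eq_bigr => j /andP[hj _].
rewrite natrD mulrDl divff // pnatr_eq0 -lt0n expn_gt0. by case: j hj.
Qed.


Theorem lemma5 (n k : nat) (hn : (1 <= n)%N) :
  ((coeff k (fps_exp phi n))%:R : rat)
    <= (k`!)%:R * \prod_(1 <= j < k.+1) (1 + (n - 1)%N%:R / (j ^ 2)%N%:R)
  /\ (k`!)%:R * \prod_(1 <= j < k.+1) (1 + (n - 1)%N%:R / (j ^ 2)%N%:R)
    <= (6%:R : rat) ^+ n * (k`!)%:R.
Proof.
case: n hn => [//|n] _.
rewrite subSS subn0 conv /coeff.
have Bp : (0 : rat) < (\prod_(1 <= j < k.+1) (j^2)%N)%:R by rewrite ltr0n Bpos.
split.
  rewrite mulrA ler_pdivlMr // -!natrM ler_nat Bfact.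
  by rewrite mulnCA leq_mul2l part1 orbT.
rewrite mulrA ler_pdivrMr // -natrX -!natrM ler_nat -mulnA mulnCA leq_mul2l.
apply/orP; right.
apply: (leq_trans (p3 n k)).
by rewrite leq_mul2r p4 orbT.
Qed.
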